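(* Let $p$ be an odd prime, $r,m$ positive integers and $s\in\{0,1,\dots,mp^{r-1}-1\}$. Then $$\binom{mp^r}{sp}\binom{2sp}{sp}\binom{2mp^r-2sp}{mp^r-sp}\equiv\binom{mp^{r-1}}{s}\binom{2s}{s}\binom{2mp^{r-1}-2s}{mp^{r-1}-s}\pmod{p^{2r}}.$$ *)

(* Defs.v *)
From mathcomp Require Import all_boot.

(* Main.v *)
Require Import Defs.
From mathcomp Require Import all_boot.
From mathcomp Require Import all_algebra.
From mathcomp Require Import ring lra zify.
Import GRing.Theory Num.Theory.

Definition Fp (p a : nat) : nat := \prod_(1 <= j < (a * p).+1 | ~~ (p %| j)) j.

Lemma no_mult_between p k i : 0 < p -> k * p < i -> i < k.+1 * p -> ~~ (p %| i).
Proof.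
move=> p0 h1 h2; apply/negP=> /dvdnP [c Hc]; rewrite Hc in h1 h2.
rewrite ltn_pmul2r // in h1; rewrite ltn_pmul2r // in h2.
by move: h1; rewrite ltnNge -ltnS h2.
Qed.

Lemma mult_prod p k : 0 < p ->
  \prod_(1 <= j < (k * p).+1 | p %| j) j = p ^ k * k`!.
Proof.
move=> p0; elim: k => [|k IH]; first by rewrite mul0n big_geq.
rewrite (big_cat_nat _ (n := (k * p).+1)) //=; last by rewrite ltnS leq_pmul2r.
rewrite IH mulSn addnC -addSn (big_cat_nat _ (n := k * p + p)) //=; last by lia.
rewrite big_nat_cond big1; last first.
  move=> i /andP [/andP [h1 h2] hp]; exfalso; move: hp; apply/negP.
  have h3 : i < k.+1 * p by rewrite mulSn addnC. exact: (@no_mult_between _ _ _ p0 h1 h3).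
rewrite big_ltn_cond // big_geq // dvdn_addr ?dvdn_mull // dvdnn.
by rewrite factS expnS; ring.
Qed.

Lemma fact_split p k : 0 < p -> (k * p)`! = p ^ k * k`! * Fp p k.
Proof.
move=> p0; rewrite fact_prod (bigID (fun j => p %| j)) /= mult_prod //.
Qed.

Lemma Fp_coprime p a : prime p -> coprime p (Fp p a).
Proof.
move=> pp; rewrite /Fp; apply: (big_ind (fun x => coprime p x)) => //.
- by rewrite coprimen1.
- by move=> x y hx hy; rewrite coprimeMr hx hy.
- by move=> i hi; rewrite prime_coprime.
Qed.


Lemma sum_ind L K : L <= K -> \sum_(1 <= i < K.+1) (i <= L : nat) = L.
Proof.
move=> LK; rewrite (big_cat_nat _ (n := L.+1)) //=.
have B : \sum_(L.+1 <= i < K.+1) (i <= L : nat) = 0.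
  rewrite big_nat_cond big1 //.
  by move=> i /andP [/andP [h1 h2] _]; rewrite leqNgt h1.
have A : \sum_(1 <= i < L.+1) (i <= L : nat) = L.
  rewrite big_nat_cond (eq_bigr (fun => 1)); last first.
    by move=> i /andP [/andP [_ h] _]; rewrite -ltnS h.
  by rewrite -big_nat_cond sum_nat_const_nat subn1 muln1.
by rewrite A B addn0.
Qed.

Lemma legendre p k K : prime p -> k <= K ->
  logn p (k`!) = \sum_(1 <= i < K.+1) k %/ p ^ i.
Proof.
move=> pp; elim: k => [|k IH] hk.
  by rewrite fact0 logn1 big1 // => i _; rewrite div0n.
rewrite factS lognM ?fact_gt0 // IH ?(ltnW hk) //.
rewrite [RHS](eq_bigr (fun i => (p ^ i %| k.+1 : nat) + k %/ p ^ i)); last first.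
  by move=> i _; rewrite divnS // expn_gt0 prime_gt0.
rewrite big_split /=; congr (_ + _).
rewrite [RHS](eq_bigr (fun i => (i <= logn p k.+1 : nat))); last first.
  by move=> i _; rewrite pfactor_dvdn.
rewrite sum_ind //; apply: leq_trans hk; exact: ltnW (ltn_logl p (ltn0Sn k)).
Qed.

Lemma generic_i s t q : 0 < q ->
  3 * (s %/ q) + 3 * (t %/ q) <= (s + t) %/ q + (s + s) %/ q + (t + t) %/ q.
Proof.
move=> q0; rewrite !divnD //; lia.
Qed.

Lemma special_i s t q : 0 < q -> odd q -> q %| s + t -> ~~ (q %| s) ->
  3 * (s %/ q) + 3 * (t %/ q) + 2 <= (s + t) %/ q + (s + s) %/ q + (t + t) %/ q.
Proof.
move=> q0 oq hst hs; rewrite !divnD //.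
have s0 : 0 < s %% q by rewrite lt0n; move: hs; rewrite /dvdn.
have s1 : s %% q < q by rewrite ltn_mod.
have t1 : t %% q < q by rewrite ltn_mod.
have hd : q %| s %% q + t %% q.
  by move: hst; rewrite {1}(divn_eq s q) {1}(divn_eq t q) addnACA -mulnDl dvdn_addr // dvdn_mull.
have e : s %% q + t %% q = q.
  case/dvdnP: hd => c hc; move: hc; case: c => [|[|c]] hc; lia.
have ne : s %% q + s %% q != q.
  by apply/eqP => h; move: oq; rewrite -h addnn odd_double.
move: ne; set a := s %% q; set b := t %% q; move: e s0 s1 t1 => e s0 s1 t1 ne.
have ne' : a + a <> q by move/eqP: ne.
lia.
Qed.

Lemma per_i p s t w u i : prime p -> odd p -> p ^ u %| s + t ->
  ~~ (p ^ w.+1 %| s) -> w < u ->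
  3 * (s %/ p ^ i) + 3 * (t %/ p ^ i) + 2 * (i <= u : nat)
   <= (s + t) %/ p ^ i + (s + s) %/ p ^ i + (t + t) %/ p ^ i + 2 * (i <= w : nat).
Proof.
move=> pp op hu hw1 wu.
have q0 : 0 < p ^ i by rewrite expn_gt0 prime_gt0.
have G := @generic_i s t _ q0.
case: (leqP i w) => hiw; case: (leqP i u) => hiu /=.
- by rewrite leq_add2r.
- by exfalso; move: (leq_ltn_trans hiw wu); rewrite ltnNge ltnW.
- have S := @special_i s t _ q0.
  have oq : odd (p ^ i) by rewrite oddX op orbT.
  have h1 : p ^ i %| s + t by apply: dvdn_trans hu; rewrite dvdn_exp2l.
  have h2 : ~~ (p ^ i %| s).
    by apply/negP => h; move/negP: hw1; apply; apply: dvdn_trans h; rewrite dvdn_exp2l.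
  by rewrite addn0; apply: S.
- by rewrite !addn0.
Qed.

Lemma partB p s t w u : prime p -> odd p -> 0 < s + t -> p ^ u %| s + t ->
  ~~ (p ^ w.+1 %| s) -> w < u ->
  p ^ (2 * (u - w)) %| 'C(s + t, s) * 'C(s + s, s) * 'C(t + t, t).
Proof.
move=> pp op st0 hu hw1 wu.
have p0 := prime_gt0 pp.
have uK0 : u < s + t.
  apply: leq_trans (dvdn_leq st0 hu); exact: ltn_expl (prime_gt1 pp).
set X := 'C(s + t, s) * 'C(s + s, s) * 'C(t + t, t).
have X0 : 0 < X by rewrite !muln_gt0 !bin_gt0 !leq_addr.
rewrite pfactor_dvdn //.
have E : X * (s`! ^ 3 * t`! ^ 3) = (s + t)`! * (s + s)`! * (t + t)`!.
  have e1 := bin_fact (leq_addr t s); rewrite addKn in e1.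
  have e2 := bin_fact (leq_addr s s); rewrite addKn in e2.
  have e3 := bin_fact (leq_addr t t); rewrite addKn in e3.
  rewrite -e1 -e2 -e3 /X; ring.
clearbody X.
have L := congr1 (logn p) E.
rewrite !lognM ?muln_gt0 ?expn_gt0 ?fact_gt0 // in L.
set K := s + s + t + t.
have k1 : s <= K by rewrite /K; lia.
have k2 : t <= K by rewrite /K; lia.
have k3 : s + t <= K by rewrite /K; lia.
have k4 : s + s <= K by rewrite /K; lia.
have k5 : t + t <= K by rewrite /K; lia.
rewrite (legendre p s K pp k1) (legendre p t K pp k2) (legendre p (s + t) K pp k3)
  (legendre p (s + s) K pp k4) (legendre p (t + t) K pp k5) in L.
have H : \sum_(1 <= i < K.+1) (3 * (s %/ p ^ i) + 3 * (t %/ p ^ i) + 2 * (i <= u : nat))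
   <= \sum_(1 <= i < K.+1) ((s + t) %/ p ^ i + (s + s) %/ p ^ i + (t + t) %/ p ^ i
                             + 2 * (i <= w : nat)).
  by apply: leq_sum => i _; apply: per_i.
have hwK : w <= K by rewrite /K; lia.
have huK : u <= K by rewrite /K; lia.
rewrite !big_split /= !sum_nat_const_nat !muln0 (@sum_ind u K huK) (@sum_ind w K hwK) in H.
move: L H.
set a := \sum_(1 <= i < K.+1) s %/ p ^ i.
set b := \sum_(1 <= i < K.+1) t %/ p ^ i.
set c := \sum_(1 <= i < K.+1) (s + t) %/ p ^ i.
set d := \sum_(1 <= i < K.+1) (s + s) %/ p ^ i.
set e := \sum_(1 <= i < K.+1) (t + t) %/ p ^ i.
move=> L H; clear E.
lia.
Qed.

Lemma ident p s t : prime p ->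
  'C((s + t) * p, s * p) * 'C((s + s) * p, s * p) * 'C((t + t) * p, t * p)
   * (Fp p s ^ 3 * Fp p t ^ 3)
  = 'C(s + t, s) * 'C(s + s, s) * 'C(t + t, t)
   * (Fp p (s + t) * Fp p (s + s) * Fp p (t + t)).
Proof.
move=> pp; have p0 := prime_gt0 pp.
have a1 := bin_fact (leq_addr (t * p) (s * p)); rewrite addKn -mulnDl in a1.
have a2 := bin_fact (leq_addr (s * p) (s * p)); rewrite addKn -mulnDl in a2.
have a3 := bin_fact (leq_addr (t * p) (t * p)); rewrite addKn -mulnDl in a3.
have b1 := bin_fact (leq_addr t s); rewrite addKn in b1.
have b2 := bin_fact (leq_addr s s); rewrite addKn in b2.
have b3 := bin_fact (leq_addr t t); rewrite addKn in b3.
have fs := fact_split p s p0; have ft := fact_split p t p0.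
have f1 := fact_split p (s + t) p0; have f2 := fact_split p (s + s) p0.
have f3 := fact_split p (t + t) p0.
set Z := (p ^ s * s`!) ^ 3 * (p ^ t * t`!) ^ 3.
have Z0 : 0 < Z by rewrite /Z !muln_gt0 !expn_gt0 p0 !fact_gt0.
apply/eqP; rewrite -(eqn_pmul2r Z0); apply/eqP.
set A := 'C((s + t) * p, s * p) * 'C((s + s) * p, s * p) * 'C((t + t) * p, t * p).
set B := 'C(s + t, s) * 'C(s + s, s) * 'C(t + t, t).
have e1 : A * (Fp p s ^ 3 * Fp p t ^ 3) * Z
   = ((s + t) * p)`! * ((s + s) * p)`! * ((t + t) * p)`!.
  rewrite -a1 -a2 -a3 fs ft /A /Z; ring.
rewrite e1 f1 f2 f3 -b1 -b2 -b3 /B /Z !expnD; ring.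
Qed.

Local Open Scope ring_scope.

Definition Qz (p : nat) (x : int) (a : nat) : int :=
  \prod_(1 <= j < (a * p).+1 | ~~ (p %| j)%N) (x + j%:Z).

Lemma Pprod (r : seq nat) (P : pred nat) (F : nat -> nat) :
  ((\prod_(i <- r | P i) F i)%N)%:Z = \prod_(i <- r | P i) (F i)%:Z.
Proof. exact: (big_morph Posz PoszM (erefl _)). Qed.

Lemma F_add p a b : (0 < p)%N ->
  (Fp p (a + b))%:Z = (Fp p a)%:Z * Qz p (a * p)%:Z b.
Proof.
move=> p0; rewrite /Fp /Qz mulnDl.
rewrite (big_cat_nat _ (n := (a * p).+1)) //=; last by lia.
rewrite PoszM; congr (_ * _).
rewrite -[((a * p).+1)%N]add1n big_addn.
have -> : ((a * p + b * p).+1 - a * p = (b * p).+1)%N by lia.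
rewrite Pprod; apply: eq_big => [j|j _]; first by rewrite dvdn_addl // dvdn_mull.
by rewrite PoszD addrC.
Qed.

Lemma expand (r : seq nat) (P : pred nat) (f : nat -> int) :
  exists e : int, forall x : int, exists c : int,
  \prod_(j <- r | P j) (x + f j) = \prod_(j <- r | P j) f j + x * e + x ^+ 2 * c.
Proof.
elim: r => [|j r [e IH]].
  by exists 0 => x; exists 0; rewrite !big_nil; ring.
case Pj: (P j).
  exists (\prod_(j <- r | P j) f j + f j * e) => x.
  have [c Hc] := IH x; exists (e + x * c + f j * c).
  rewrite !big_cons Pj Hc; ring.
exists e => x; have [c Hc] := IH x; exists c.
by rewrite !big_cons Pj Hc.
Qed.

Lemma sign_prod (n : nat) (P : pred nat) (G : nat -> int) :
  exists k : nat, \prod_(1 <= j < n) (if P j then - G j else 1)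
    = (-1) ^+ k * \prod_(1 <= j < n) (if P j then G j else 1).
Proof.
have -> : \prod_(1 <= j < n) (if P j then - G j else 1)
   = \prod_(1 <= j < n) ((if P j then -1 else 1) * (if P j then G j else 1)).
  by apply: eq_bigr => j _; case: (P j); rewrite ?mulN1r ?mul1r.
rewrite big_split /=.
suff [k ->] : exists k : nat, \prod_(1 <= j < n) (if P j then -1 else 1) = (-1) ^+ k :> int by exists k.
apply: (big_ind (fun x => exists k : nat, x = (-1) ^+ k)).
- by exists 0%N.
- by move=> x y [k1 ->] [k2 ->]; exists (k1 + k2)%N; rewrite exprD.
- by move=> i _; case: (P i); [exists 1%N | exists 0%N].
Qed.

Lemma Qsym p a : prime p ->
  exists k : nat, Qz p (- (a * p)%N%:Z) a = (-1) ^+ k * (Fp p a)%:Z.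
Proof.
move=> pp; set n := (a * p)%N.
have [n0|npos] := posnP n.
  by exists 0%N; rewrite /Qz /Fp -/n n0 !big_geq // mul1r.
have E1 : Qz p (- n%:Z) a = \prod_(1 <= j < n) (if ~~ (p %| j)%N then - (j%:Z) else 1).
  rewrite /Qz -/n big_mkcond big_nat_recr //= dvdn_mull // mulr1.
  rewrite big_nat_rev /=; apply: eq_big_nat => j /andP [h1 h2].
  have -> : (1 + n - j.+1 = n - j)%N by lia.
  rewrite dvdn_subr ?dvdn_mull //; last by lia.
  by case: (p %| j)%N => //=; rewrite -(subzn (ltnW h2)); ring.
have E2 : (Fp p a)%:Z = \prod_(1 <= j < n) (if ~~ (p %| j)%N then (j%:Z) else 1).
  rewrite /Fp -/n Pprod big_mkcond big_nat_recr //= dvdn_mull // mulr1.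
  by [].
have [k Hk] := sign_prod n (fun j => ~~ (p %| j)%N) (fun j => j%:Z).
by exists k; rewrite E1 E2 Hk.
Qed.

Lemma key p a : prime p -> odd p -> exists e : int, forall x : int, exists c : int,
  Qz p x a = (Fp p a)%:Z + x * (a * p)%N%:Z * e + x ^+ 2 * c.
Proof.
move=> pp op; set n := (a * p)%N.
have [e1 H] := expand (index_iota 1 n.+1) (fun j => ~~ (p %| j)%N) (fun j => j%:Z).
have HF : \prod_(j <- index_iota 1 n.+1 | ~~ (p %| j)%N) (j%:Z) = (Fp p a)%:Z.
  by rewrite /Fp Pprod.
have [n0|npos] := posnP n.
  exists 0 => x; exists 0; rewrite /Qz /Fp -/n n0 !big_geq //; ring.
have [c0 H0] := H (- n%:Z).
have [k Hk] := Qsym p a pp; rewrite /Qz -/n in Hk.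
rewrite Hk HF -signr_odd in H0.
case: (odd k) H0 => /= H0.
  exfalso.
  have E : (Fp p a + Fp p a)%N%:Z - n%:Z * (e1 - n%:Z * c0)
     = - ((-1) ^+ 1 * (Fp p a)%:Z - ((Fp p a)%:Z + - n%:Z * e1 + (- n%:Z) ^+ 2 * c0)).
    rewrite PoszD; move: (Posz (Fp p a)) (Posz n) => F N. ring.
  rewrite H0 subrr oppr0 in E; move/eqP: E; rewrite subr_eq0 => /eqP E.
  have := congr1 absz E; rewrite abszM !absz_nat => E'.
  have : (p %| 2 * Fp p a)%N by rewrite mul2n -addnn E' dvdn_mulr // dvdn_mull.
  rewrite Euclid_dvdM // => /orP [h2|hF].
    have := dvdn_leq (isT : (0 < 2)%N) h2; rewrite leq_eqVlt => /orP [/eqP p2|].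
      by move: op; rewrite p2.
    by rewrite ltnS leqNgt prime_gt1.
  by move: (Fp_coprime p a pp); rewrite prime_coprime // hF.
have E : n%:Z * e1 = n%:Z * (n%:Z * c0).
  apply/eqP; rewrite -subr_eq0; apply/eqP.
  have -> : n%:Z * e1 - n%:Z * (n%:Z * c0)
     = ((-1) ^+ 0 * (Fp p a)%:Z - ((Fp p a)%:Z + - n%:Z * e1 + (- n%:Z) ^+ 2 * c0)) by ring.
  by rewrite H0 subrr.
have nz : n%:Z != 0 by rewrite eqz_nat -lt0n.
have {}E := mulfI nz E.
exists c0 => x; have [c Hc] := H x; exists c.
by rewrite /Qz -/n Hc HF E; ring.
Qed.

Lemma partA p s0 t0 w : prime p -> odd p -> (p ^ w %| s0)%N -> (p ^ w %| t0)%N ->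
  (((p ^ w * p)%N%:Z) ^+ 2 %|
     (Fp p (s0 + t0))%:Z * (Fp p (s0 + s0))%:Z * (Fp p (t0 + t0))%:Z
     - (Fp p s0)%:Z ^+ 3 * (Fp p t0)%:Z ^+ 3)%Z.
Proof.
move=> pp op /dvdnP [s' ->] /dvdnP [t' ->].
have p0 := prime_gt0 pp.
set s := (s' * p ^ w)%N; set t := (t' * p ^ w)%N.
rewrite !F_add //.
have [es Hs] := key p s pp op; have [et Ht] := key p t pp op.
have [c1 H1] := Ht (s * p)%N%:Z.
have [c2 H2] := Hs (s * p)%N%:Z.
have [c3 H3] := Ht (t * p)%N%:Z.
rewrite H1 H2 H3.
set P := (p ^ w * p)%N%:Z.
have Es : (s * p)%N%:Z = s'%:Z * P by rewrite /P -PoszM /s mulnA.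
have Et : (t * p)%N%:Z = t'%:Z * P by rewrite /P -PoszM /t mulnA.
rewrite Es Et.
move: (Posz (Fp p s)) (Posz (Fp p t)) => Fs Ft.
apply/dvdzP.
set k1 := s'%:Z * t'%:Z * et + s'%:Z ^+ 2 * c1.
set k2 := s'%:Z ^+ 2 * es + s'%:Z ^+ 2 * c2.
set k3 := t'%:Z ^+ 2 * et + t'%:Z ^+ 2 * c3.
exists (Fs ^+ 2 * Ft * (k1 * (Fs + P ^+ 2 * k2) * (Ft + P ^+ 2 * k3)
   + Ft * k2 * (Ft + P ^+ 2 * k3) + Ft * Fs * k3)).
rewrite /k1 /k2 /k3; ring.
Qed.




Lemma PX (x k : nat) : ((x ^ k)%N)%:Z = x%:Z ^+ k.
Proof. by elim: k => // k IH; rewrite expnS exprS PoszM IH. Qed.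

Lemma core p s t u : prime p -> odd p -> (0 < s + t)%N -> (p ^ u %| s + t)%N ->
  ('C((s + t) * p, s * p) * 'C((s + s) * p, s * p) * 'C((t + t) * p, t * p)
  = 'C(s + t, s) * 'C(s + s, s) * 'C(t + t, t) %[mod p ^ (2 * u.+1)])%N.
Proof.
move=> pp op st0 hu.
have p0 := prime_gt0 pp.
have I := ident p s t pp.
set A := ('C((s + t) * p, s * p) * 'C((s + s) * p, s * p) * 'C((t + t) * p, t * p))%N in I *.
set B := ('C(s + t, s) * 'C(s + s, s) * 'C(t + t, t))%N in I *.
set N := (Fp p (s + t) * Fp p (s + s) * Fp p (t + t))%N in I.
set D := (Fp p s ^ 3 * Fp p t ^ 3)%N in I.
have [w [hws [hwt hcase]]] : exists w, (p ^ w %| s)%N /\ (p ^ w %| t)%N /\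
    (w = u \/ (w < u /\ ~~ (p ^ w.+1 %| s)))%N.
  case: (posnP s) => [s0|spos].
    exists u; rewrite s0 dvdn0; split=> //; split; last by left.
    by move: hu; rewrite s0 add0n.
  case: (leqP u (logn p s)) => hL.
    exists u; have hs : (p ^ u %| s)%N by rewrite pfactor_dvdn.
    split=> //; split; last by left.
    by move: hu; rewrite dvdn_addr.
  exists (logn p s); have hs := pfactor_dvdnn p s.
  split=> //; split.
    have : (p ^ logn p s %| s + t)%N by apply: dvdn_trans hu; rewrite dvdn_exp2l // ltnW.
    by rewrite dvdn_addr.
  by right; split=> //; rewrite pfactor_dvdn // ltnn.
have hA := partA p s t w pp op hws hwt.
have EN : N%:Z - D%:Z = (Fp p (s + t))%:Z * (Fp p (s + s))%:Z * (Fp p (t + t))%:Z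
     - (Fp p s)%:Z ^+ 3 * (Fp p t)%:Z ^+ 3.
  by rewrite /N /D !PoszM; ring.
rewrite -EN in hA.
have hND : ((p ^ (2 * u.+1))%N%:Z %| B%:Z * (N%:Z - D%:Z))%Z.
  case: hcase => [wu | [wu hw1]].
    rewrite wu in hA; apply: dvdz_mull.
    by move: hA; rewrite -PX -expnSr -expnM mulnC.
  have hB := partB p s t w u pp op st0 hu hw1 wu.
  have hBz : ((p ^ (2 * (u - w)))%N%:Z %| B%:Z)%Z by rewrite dvdzE.
  have := dvdz_mul hBz hA.
  rewrite -PX -expnSr -expnM -PoszM -expnD.
  by have -> : (2 * (u - w) + w.+1 * 2 = 2 * u.+1)%N by move: wu; clear; lia.
have hAB : ((p ^ (2 * u.+1))%N%:Z %| (A%:Z - B%:Z) * D%:Z)%Z.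
  have -> : (A%:Z - B%:Z) * D%:Z = B%:Z * (N%:Z - D%:Z).
    by rewrite mulrBl mulrBr -!PoszM I.
  exact: hND.
rewrite Gauss_dvdzl in hAB; last first.
  rewrite coprimezE /=; apply: coprimeXl.
  by rewrite /D coprimeMr !coprimeXr ?(Fp_coprime _ _ pp).
move: hAB; rewrite -eqz_mod_dvd !modz_nat eqz_nat => /eqP //.
Qed.

Local Close Scope ring_scope.

Theorem lemma2p14 (p r m s : nat) :
  prime p -> odd p -> 0 < r -> 0 < m -> s < m * p ^ r.-1 ->
  'C(m * p ^ r, s * p) * 'C(2 * (s * p), s * p)
    * 'C(2 * (m * p ^ r) - 2 * (s * p), m * p ^ r - s * p)
  = 'C(m * p ^ r.-1, s) * 'C(2 * s, s)
    * 'C(2 * (m * p ^ r.-1) - 2 * s, m * p ^ r.-1 - s)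
  %[mod p ^ (2 * r)].
Proof.
move=> pp op r0 m0 sn.
have [u ru] : exists u, r = u.+1 by exists r.-1; rewrite prednK.
subst r; rewrite /= in sn *.
have en : m * p ^ u.+1 = (m * p ^ u) * p by rewrite expnSr mulnA.
rewrite en.
move: sn; set n := m * p ^ u => sn.
have hu : p ^ u %| n by rewrite /n dvdn_mull.
have tn : n = s + (n - s) by rewrite subnKC // ltnW.
move: hu; rewrite tn; set t := n - s => hu.
have st0 : 0 < s + t by rewrite -tn /n muln_gt0 m0 expn_gt0 prime_gt0.
have e1 : 2 * (s * p) = (s + s) * p by rewrite mulnDl; lia.
have e2 : 2 * ((s + t) * p) - 2 * (s * p) = (t + t) * p by rewrite !mulnDl; lia.
have e3 : (s + t) * p - s * p = t * p by rewrite mulnDl; lia.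
have e4 : 2 * s = s + s by lia.
have e5 : 2 * (s + t) - 2 * s = t + t by lia.
have e6 : s + t - s = t by lia.
rewrite e2 e3 e1 e5 e6 e4.
exact: core pp op st0 hu.
Qed.
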